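(* Let $\mathcal{Q}$ be a family of Boolean constraints. If there exists a polynomial \texttt{upi} encoding for $\mathcal{Q}$, then there exists a polynomial \texttt{upac} encoding for $\mathcal{Q}$. That is: if there is a polynomial $P$ such that every $q\in\mathcal{Q}$ on $n$ variables has a \texttt{upi} \textsc{cnf} encoding of size at most $P(n)$, then there is a polynomial $P'$ such that every $q\in\mathcal{Q}$ on $n$ variables has a \textsc{cnf} encoding of size at most $P'(n)$ that is both \texttt{upi} and \texttt{upac}.
   Context: Assignments: an assignment of a Boolean variable $v$ is $[v,1]$ (also written $[v]$) or $[v,0]$ (also written $[\neg v]$); for a literal $\omega$, $[\omega]$ is the assignment making $\omega$ true. For a set $V$ of Boolean variables, $\mathcal{A}_V$ is the set of complete non-contradictory assignments on $V$ (exactly one value per variable) and $\mathcal{I}_V$ the set of partial non-contradictory assignments (at most one value per variable). $\mathtt{lit}(V)=\bigcup_{v\in V}\{v,\neg v\}$. The size of a \textsc{cnf} formula is the total number of literal occurrences in its clauses. For a \textsc{cnf} formula $\Sigma$ and an assignment $I$, $\Sigma|_I$ is $\Sigma$ together with the unit clause $(v)$ for each $[v,1]\in I$ and $(\neg v)$ for each $[v,0]\in I$. Unit resolution: given an assignment $U$, a clause $c$ is unit w.r.t. $U$ if $U$ falsifies all literals of $c$ except exactly one, its active literal $\omega$. Unit resolution on $\Sigma$ starts with $U=\emptyset$ and repeatedly adds $[\omega]$ for active literals $\omega$ of unit clauses w.r.t. $U$, until $U$ is contradictory (contains $[v,0]$ and $[v,1]$ for some $v$) or nothing new can be added. It ''produces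 the empty clause'' iff $U$ becomes contradictory, and ''infers $[\omega]$'' iff $[\omega]$ is added to $U$. Constraints: a Boolean constraint $q$ on a finite variable set $V$ is any representation of a function $h_q:\mathcal{A}_V\to\{\mathtt{sat},\mathtt{unsat}\}$; $A\in\mathcal{A}_V$ satisfies $q$ iff $h_q(A)=\mathtt{sat}$, otherwise falsifies it. A partial assignment $I\in\mathcal{I}_V$ falsifies $q$ iff every $A\in\mathcal{A}_V$ with $I\subseteq A$ falsifies $q$. A \textsc{cnf} encoding of $q$ is a \textsc{cnf} formula $\Sigma_q$ (possibly with extra variables outside $V$) such that for every $A\in\mathcal{A}_V$, $\Sigma_q|_A$ is satisfiable iff $A$ satisfies $q$. It is \texttt{upi} if for every $I\in\mathcal{I}_V$, unit resolution on $\Sigma_q|_I$ produces the empty clause iff $I$ falsifies $q$. It is \texttt{upac} if for every $I\in\mathcal{I}_V$ that does not falsify $q$ and every literal $\omega\in\mathtt{lit}(V)$ with $[\omega]\notin I$, unit resolution on $\Sigma_q|_I$ does not produce the empty clause, and it infers $[\omega]$ iff $I\cup\{[\neg\omega]\}$ falsifies $q$. An encoding scheme for a family $\mathcal{Q}$ is polynomial if the size of the encoding of each $q\in\mathcal{Q}$ is bounded by a fixed polynomial in the number of variables of $q$. *)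

(* Defs.v *)
From mathcomp Require Import all_boot.
Set Implicit Arguments. Unset Strict Implicit. Unset Printing Implicit Defensive.

(* Boolean variables are natural numbers; a literal / an assignment of a
   single variable is a pair [v,b] = (v, b). *)
Definition lit := (nat * bool)%type.
Definition clause := seq lit.
Definition cnf := seq clause.
Definition assignment := seq lit.

Definition neg_lit (l : lit) : lit := (l.1, ~~ l.2).

Definition contradictory (U : assignment) : Prop :=
  exists v, (v, true) \in U /\ (v, false) \in U.

Definition unit_wrt (U : assignment) (c : clause) (w : lit) : Prop :=
  w \in c /\ (forall l, l \in c -> l <> w -> neg_lit l \in U).

Inductive ur_reach (S : cnf) : assignment -> Prop :=
  | ur_start : ur_reach S [::]
  | ur_step U c w :
      ur_reach S U -> ~ contradictory U -> c \in S -> unit_wrt U c w ->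
      w \notin U -> ur_reach S (w :: U).

Definition ur_empty_clause (S : cnf) : Prop :=
  exists U, ur_reach S U /\ contradictory U.

Definition ur_infers (S : cnf) (w : lit) : Prop :=
  exists U, ur_reach S U /\ w \in U.

Definition cnf_restr (S : cnf) (I : assignment) : cnf :=
  S ++ [seq [:: l] | l <- I].

Definition cnf_size (S : cnf) : nat := sumn (map size S).

Definition satisfiable (S : cnf) : Prop :=
  exists A : nat -> bool, forall c, c \in S -> exists2 l, l \in c & A l.1 = l.2.

(* A Boolean constraint on a finite set V of variables: a function h_q on
   complete assignments of V (represented by functions nat -> bool that
   depend only on the values on V). *)
Record constraint := Constraint {
  cvars : seq nat;
  cvars_uniq : uniq cvars;
  ceval : (nat -> bool) -> bool;
  ceval_local : forall A B : nat -> bool, {in cvars, A =1 B} -> ceval A = ceval B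
}.

Definition full_asg (V : seq nat) (A : nat -> bool) : assignment :=
  [seq (v, A v) | v <- V].

Definition partial_on (V : seq nat) (I : assignment) : Prop :=
  (forall l, l \in I -> l.1 \in V) /\ ~ contradictory I.

Definition extends (A : nat -> bool) (I : assignment) : Prop :=
  forall l, l \in I -> A l.1 = l.2.

Definition falsifies (q : constraint) (I : assignment) : Prop :=
  forall A : nat -> bool, extends A I -> ceval q A = false.

Definition is_encoding (q : constraint) (S : cnf) : Prop :=
  forall A : nat -> bool,
    satisfiable (cnf_restr S (full_asg (cvars q) A)) <-> ceval q A = true.

Definition upi (q : constraint) (S : cnf) : Prop :=
  forall I, partial_on (cvars q) I ->
    (ur_empty_clause (cnf_restr S I) <-> falsifies q I).

Definition upac (q : constraint) (S : cnf) : Prop :=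
  forall I, partial_on (cvars q) I -> ~ falsifies q I ->
    ~ ur_empty_clause (cnf_restr S I) /\
    (forall w : lit, w.1 \in cvars q -> w \notin I ->
       (ur_infers (cnf_restr S I) w <-> falsifies q (neg_lit w :: I))).

Definition peval (cs : seq nat) (n : nat) : nat :=
  \sum_(i < size cs) nth 0 cs i * n ^ i.

(* Main.v *)
Require Import Defs.
From mathcomp Require Import all_boot.
From mathcomp Require Import zify.
From Stdlib Require Import Classical.
Set Implicit Arguments. Unset Strict Implicit. Unset Printing Implicit Defensive.

Definition sat_by (B : nat -> bool) (S : cnf) : Prop :=
  forall c, c \in S -> exists2 l, l \in c & B l.1 = l.2.

Lemma neg_litK l : neg_lit (neg_lit l) = l.
Proof. by case: l => a b; rewrite /neg_lit /= negbK. Qed.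

Lemma mem_restr S I c : c \in cnf_restr S I -> c \in S \/ exists2 l, l \in I & c = [:: l].
Proof.
rewrite /cnf_restr mem_cat => /orP [H|]; first by left.
move=> /mapP [l Hl ->]; right; by exists l.
Qed.

Lemma sat_restr B S I : sat_by B S -> (forall l, l \in I -> B l.1 = l.2) -> sat_by B (cnf_restr S I).
Proof.
move=> HS HI c /mem_restr [/HS//|[l Hl ->]].
exists l; [by rewrite mem_seq1 | exact: HI].
Qed.

Lemma sat_restr_inv B S I : sat_by B (cnf_restr S I) -> sat_by B S /\ (forall l, l \in I -> B l.1 = l.2).
Proof.
move=> H; split.
- move=> c Hc; apply: H; by rewrite /cnf_restr mem_cat Hc.
- move=> l Hl. have Hm : [:: l] \in cnf_restr S I by rewrite /cnf_restr mem_cat map_f ?orbT.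
  have [l' ] := H _ Hm. by rewrite mem_seq1 => /eqP ->.
Qed.

Lemma ur_sound B S U : sat_by B S -> ur_reach S U -> forall l, l \in U -> B l.1 = l.2.
Proof.
move=> HB; elim=> [|U1 c w HU IH _ Hc [Hw Hu] _] l //.
rewrite inE => /orP [/eqP -> | /IH //].
have [l0 Hl0 Hv] := HB c Hc.
case: (eqVneq l0 w) => [<- //| Hne].
move: (IH _ (Hu l0 Hl0 (elimN eqP Hne))) => /=; rewrite Hv; by case: (l0.2).
Qed.

Lemma ur_sound_nc B S U : sat_by B S -> ur_reach S U -> ~ contradictory U.
Proof.
move=> HB HU [v [Ht Hf]].
have := ur_sound HB HU Ht; have := ur_sound HB HU Hf. by move=> /= ->.
Qed.

Lemma ur_mono S S' U : {subset S <= S'} -> ur_reach S U -> ur_reach S' U.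
Proof.
move=> sub; elim=> [|U1 c w _ IH Hn Hc Hu Hw]; first exact: ur_start.
by apply: ur_step IH Hn (sub _ Hc) Hu Hw.
Qed.

Lemma ur_close S U c x : (forall U, ur_reach S U -> ~ contradictory U) -> ur_reach S U ->
  c \in S -> unit_wrt U c x ->
  exists U', [/\ ur_reach S U', {subset U <= U'} & x \in U'].
Proof.
move=> NC HU Hc Hu. case Hx: (x \in U).
- by exists U; split.
- exists (x :: U); split.
  + apply: ur_step HU (NC _ HU) Hc Hu _; by rewrite Hx.
  + by move=> y Hy; rewrite inE Hy orbT.
  + by rewrite inE eqxx.
Qed.

Lemma ur_lits S U l : ur_reach S U -> l \in U -> exists2 c, c \in S & l \in c.
Proof.
elim=> [|U1 c w _ IH _ Hc [Hw _] _] //.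
rewrite inE => /orP [/eqP -> | /IH //]. by exists c.
Qed.

Definition allvars (S : cnf) (V : seq nat) : seq nat := [seq l.1 | l <- flatten S] ++ V.
Definition bnd (S : cnf) (V : seq nat) : nat := foldr maxn 0 (allvars S V).

Lemma foldr_max_ub (s : seq nat) x : x \in s -> x <= foldr maxn 0 s.
Proof.
elim: s => //= a s IH; rewrite inE => /orP [/eqP -> | /IH H]; first exact: leq_maxl.
exact: leq_trans H (leq_maxr _ _).
Qed.

Definition rv (M : nat) (w : lit) (x : nat) (s : bool) : nat :=
  M.+1 + CodeSeq.code [:: w.1; nat_of_bool w.2; x; nat_of_bool s].
Definition rl (M : nat) (w : lit) (l : lit) : lit := (rv M w l.1 l.2, true).
Definition hc M w (c : clause) (x : lit) : clause :=
  rl M w x :: [seq neg_lit (rl M w (neg_lit l)) | l <- c & l != x].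
Definition litsV (V : seq nat) : seq lit := flatten [seq [:: (v, true); (v, false)] | v <- V].
Definition horn M w (S : cnf) : cnf := flatten [seq [seq hc M w c x | x <- c] | c <- S].
Definition confl M w (S : cnf) V : cnf :=
  [seq [:: neg_lit (rl M w (y, true)); neg_lit (rl M w (y, false)); w] | y <- allvars S V].
Definition links M w V : cnf := [seq [:: neg_lit l; rl M w l] | l <- litsV V].
Definition copy S V M w : cnf :=
  [:: rl M w (neg_lit w)] :: horn M w S ++ confl M w S V ++ links M w V.
Definition big S V : cnf := S ++ flatten [seq copy S V (bnd S V) w | w <- litsV V].

Lemma mem_litsV V l : (l \in litsV V) = (l.1 \in V).
Proof.
case: l => v b /=. elim: V => //= a V IH.
rewrite mem_cat IH !inE !xpair_eqE. by case: (b); case: (v == a).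
Qed.

Lemma copy_sub S V w c : w.1 \in V -> c \in copy S V (bnd S V) w -> c \in big S V.
Proof.
move=> Hw Hc; rewrite /big mem_cat; apply/orP; right; apply/flatten_mapP; exists w => //.
by rewrite mem_litsV.
Qed.

Definition bigmodel S V (B0 : nat -> bool) (n : nat) : bool :=
  if bnd S V < n then
    match CodeSeq.decode (n - (bnd S V).+1) with
    | [:: u; b; y; s] => (nat_of_bool (B0 y) == s) || (nat_of_bool (B0 u) == b)
    | _ => false end
  else B0 n.

Lemma nbE (a b : bool) : (nat_of_bool a == nat_of_bool b) = (a == b).
Proof. by case: a; case: b. Qed.

Lemma bigmodel_rv S V B0 w x s :
  bigmodel S V B0 (rv (bnd S V) w x s) = (B0 x == s) || (B0 w.1 == w.2).
Proof.
rewrite /bigmodel /rv.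
have -> : bnd S V < (bnd S V).+1 + CodeSeq.code [:: w.1; nat_of_bool w.2; x; nat_of_bool s] by lia.
by rewrite addKn CodeSeq.codeK !nbE.
Qed.

Lemma bigmodel_small S V B0 n : n <= bnd S V -> bigmodel S V B0 n = B0 n.
Proof. by rewrite /bigmodel leqNgt => /negbTE ->. Qed.

Lemma bnd_S (S : cnf) (V : seq nat) (c : clause) (l : lit) : c \in S -> l \in c -> l.1 <= bnd S V.
Proof.
move=> Hc Hl; apply: foldr_max_ub; rewrite mem_cat; apply/orP; left.
apply/map_f/flattenP; by exists c.
Qed.

Lemma bnd_V (S : cnf) (V : seq nat) v : v \in V -> v <= bnd S V.
Proof. move=> Hv; apply: foldr_max_ub; by rewrite mem_cat Hv orbT. Qed.

Lemma model_big S V B0 : sat_by B0 S -> sat_by (bigmodel S V B0) (big S V).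
Proof.
move=> HB c; rewrite /big mem_cat => /orP [Hc | /flatten_mapP [w Hw Hc]].
- have [l Hl Hv] := HB c Hc. exists l => //. by rewrite bigmodel_small // (bnd_S _ Hc Hl).
- rewrite mem_litsV in Hw.
  move: Hc; rewrite /copy inE !mem_cat => /orP [/eqP -> | /orP [Hc | /orP [Hc | Hc]]].
  + exists (rl (bnd S V) w (neg_lit w)); first by rewrite inE.
    rewrite /= bigmodel_rv. by case: (B0 w.1); case: (w.2).
  + move: Hc => /flatten_mapP [c0 Hc0 /mapP [x Hx ->]].
    case Hww: (B0 w.1 == w.2).
    * exists (rl (bnd S V) w x); first by rewrite inE eqxx.
      by rewrite /= bigmodel_rv Hww orbT.
    * have [l0 Hl0 Hv] := HB c0 Hc0.
      case: (eqVneq l0 x) => [El | Hne].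
      - exists (rl (bnd S V) w x); first by rewrite inE eqxx.
        by rewrite /= bigmodel_rv -El Hv eqxx.
      - exists (neg_lit (rl (bnd S V) w (neg_lit l0))).
        + rewrite inE; apply/orP; right; apply: map_f; by rewrite mem_filter Hne Hl0.
        + rewrite /= bigmodel_rv Hww Hv orbF. by case: (l0.2).
  + move: Hc => /mapP [y Hy ->].
    case Hww: (B0 w.1 == w.2).
    * exists w; first by rewrite !inE eqxx !orbT.
      rewrite bigmodel_small ?bnd_V //. exact/eqP.
    * case Hy0: (B0 y).
      - exists (neg_lit (rl (bnd S V) w (y, false))); first by rewrite !inE eqxx orbT.
        by rewrite /= bigmodel_rv Hww Hy0.
      - exists (neg_lit (rl (bnd S V) w (y, true))); first by rewrite !inE eqxx.
        by rewrite /= bigmodel_rv Hww Hy0.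
  + move: Hc => /mapP [l Hl ->].
    rewrite mem_litsV in Hl.
    case H: (B0 l.1 == l.2).
    * exists (rl (bnd S V) w l); first by rewrite !inE eqxx orbT.
      by rewrite /= bigmodel_rv H.
    * exists (neg_lit l); first by rewrite !inE eqxx.
      rewrite /= bigmodel_small ?bnd_V //. move: H; by case: (B0 l.1); case: (l.2).
Qed.

Lemma full_asg_mem V A v : v \in V -> (v, A v) \in full_asg V A.
Proof. move=> Hv; exact: (map_f (fun v => (v, A v)) Hv). Qed.

Lemma full_asg_inv V A l : l \in full_asg V A -> l.1 \in V /\ A l.1 = l.2.
Proof. by move=> /mapP [v Hv ->]. Qed.

Lemma model_full q S A : is_encoding q S -> ceval q A = true ->
  exists B, sat_by B S /\ forall v, v \in cvars q -> B v = A v.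
Proof.
move=> enc Hq. have [B HB] := (proj2 (enc A)) Hq.
have [H1 H2] := sat_restr_inv HB. exists B; split => // v Hv.
exact: (H2 _ (full_asg_mem A Hv)).
Qed.

Lemma enc_big q S : is_encoding q S -> is_encoding q (big S (cvars q)).
Proof.
move=> enc A; split.
- move=> [B HB]; apply/(enc A); exists B. have [H1 H2] := sat_restr_inv HB.
  apply: sat_restr => // c Hc; apply: H1; by rewrite /big mem_cat Hc.
- move=> Hq. have [B0 [HB0 HV]] := model_full enc Hq.
  exists (bigmodel S (cvars q) B0). apply: sat_restr; first exact: model_big.
  move=> l /full_asg_inv [Hl Hv]. rewrite bigmodel_small ?bnd_V // -Hv. exact: HV.
Qed.

Lemma not_falsifies q I : ~ falsifies q I -> exists A, extends A I /\ ceval q A = true.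
Proof.
move=> H; apply: NNPP => H'; apply: H => A HA.
case E: (ceval q A) => //. exfalso; apply: H'; by exists A.
Qed.

Lemma exists_model q S I : is_encoding q S -> partial_on (cvars q) I -> ~ falsifies q I ->
  exists B, sat_by B (cnf_restr (big S (cvars q)) I).
Proof.
move=> enc HI Hnf. have [A [HA Hq]] := not_falsifies Hnf.
have [B [HB HV]] := model_full (enc_big enc) Hq.
exists B; apply: sat_restr => // l Hl. rewrite HV ?HA //. exact: HI.1.
Qed.

Lemma upi_big q S : is_encoding q S -> upi q S -> upi q (big S (cvars q)).
Proof.
move=> enc up I HI; split.
- move=> [U [HU Hc]]. apply: NNPP => Hf. have [B HB] := exists_model enc HI Hf.
  exact: (ur_sound_nc HB HU Hc).
- move=> /(proj2 (up I HI)) [U [HU Hc]]. exists U; split => //. apply: ur_mono HU.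
  move=> c /mem_restr [Hc' | [l Hl ->]]; rewrite /cnf_restr mem_cat.
  + by rewrite /big mem_cat Hc'.
  + by rewrite map_f ?orbT.
Qed.

Lemma simulate S V I w :
  w.1 \in V -> (forall l, l \in I -> l.1 \in V) ->
  (forall U, ur_reach (cnf_restr (big S V) I) U -> ~ contradictory U) ->
  forall U0, ur_reach (cnf_restr S (neg_lit w :: I)) U0 ->
  exists U, ur_reach (cnf_restr (big S V) I) U /\ forall l, l \in U0 -> rl (bnd S V) w l \in U.
Proof.
move=> Hw HIV NC.
have inS' : forall c, c \in copy S V (bnd S V) w -> c \in cnf_restr (big S V) I.
  move=> c Hc; by rewrite /cnf_restr mem_cat (copy_sub Hw Hc).
move=> U0 HU0; elim: HU0 => [|U1 c x HU1 [U [HU HUU0]] _ Hc [Hx Hu] _].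
- exists [::]; split => //; exact: ur_start.
- case/mem_restr: Hc => [Hc | [l Hl Ec]].
  + have Hhc : hc (bnd S V) w c x \in cnf_restr (big S V) I.
      apply: inS'. rewrite /copy inE mem_cat; apply/orP; right; apply/orP; left.
      apply/flatten_mapP; exists c => //; exact: map_f.
    have Hunit : unit_wrt U (hc (bnd S V) w c x) (rl (bnd S V) w x).
      split; first by rewrite inE eqxx.
      move=> l'; rewrite inE => /orP [/eqP -> // | /mapP [l Hl ->]] _.
      rewrite mem_filter in Hl; case/andP: Hl => Hlx Hlc.
      rewrite neg_litK. apply: HUU0. apply: Hu => //; exact/eqP.
    have [U' [HU' sub Hin]] := ur_close NC HU Hhc Hunit.
    exists U'; split => // l'; rewrite inE => /orP [/eqP -> // | /HUU0 /sub //].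
  + subst c. have Ex : x = l by move: Hx; rewrite mem_seq1 => /eqP.
    subst x.
    rewrite inE in Hl; case/orP: Hl => [/eqP El | Hl].
    * subst l.
      have Hcl : [:: rl (bnd S V) w (neg_lit w)] \in cnf_restr (big S V) I.
        by apply: inS'; rewrite /copy inE eqxx.
      have Hunit : unit_wrt U [:: rl (bnd S V) w (neg_lit w)] (rl (bnd S V) w (neg_lit w)).
        split; first by rewrite mem_seq1.
        by move=> l'; rewrite mem_seq1 => /eqP ->.
      have [U' [HU' sub Hin]] := ur_close NC HU Hcl Hunit.
      exists U'; split => // l'; rewrite inE => /orP [/eqP -> // | /HUU0 /sub //].
    * have Hcl : [:: l] \in cnf_restr (big S V) I by rewrite /cnf_restr mem_cat map_f ?orbT.
      have Hunit : unit_wrt U [:: l] l.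
        split; first by rewrite mem_seq1.
        by move=> l'; rewrite mem_seq1 => /eqP ->.
      have [U1' [HU1' sub1 Hin1]] := ur_close NC HU Hcl Hunit.
      have Hlk : [:: neg_lit l; rl (bnd S V) w l] \in cnf_restr (big S V) I.
        apply: inS'. rewrite /copy inE !mem_cat; apply/orP; right; apply/orP; right.
        apply/orP; right. apply: map_f. rewrite mem_litsV. exact: HIV.
      have Hunit2 : unit_wrt U1' [:: neg_lit l; rl (bnd S V) w l] (rl (bnd S V) w l).
        split; first by rewrite !inE eqxx orbT.
        move=> l'; rewrite !inE => /orP [/eqP -> _ | /eqP -> H]; last by case: H.
        by rewrite neg_litK.
      have [U2 [HU2 sub2 Hin2]] := ur_close NC HU1' Hlk Hunit2.
      exists U2; split => // l'; rewrite inE => /orP [/eqP -> // | /HUU0 /sub1 /sub2 //].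
Qed.

Lemma upac_big q S : is_encoding q S -> upi q S -> upac q (big S (cvars q)).
Proof.
move=> enc up I HI Hnf. have [B HB] := exists_model enc HI Hnf.
have NC : forall U, ur_reach (cnf_restr (big S (cvars q)) I) U -> ~ contradictory U.
  move=> U HU; exact: ur_sound_nc HB HU.
split; first by move=> [U [HU Hc]]; exact: NC HU Hc.
move=> w Hw HwI; split.
- move=> [U [HU HwU]] A HA. case E: (ceval q A) => //. exfalso.
  have [B' [HB' HV]] := model_full (enc_big enc) E.
  have HB'' : sat_by B' (cnf_restr (big S (cvars q)) I).
    apply: sat_restr => // l Hl. rewrite HV ?HA ?inE ?Hl ?orbT //. exact: HI.1.
  have HAw := HA (neg_lit w) (mem_head _ _). rewrite /= in HAw.
  have := ur_sound HB'' HU HwU. rewrite HV // HAw.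
  by case: (w.2).
- move=> Hfal.
  have HI' : partial_on (cvars q) (neg_lit w :: I).
    split.
    + move=> l; rewrite inE => /orP [/eqP -> // | ]. exact: HI.1.
    + move=> [u [Ht Hf]]. rewrite !inE in Ht Hf.
      case/orP: Ht => [/eqP Ht | Ht]; case/orP: Hf => [/eqP Hf | Hf].
      * rewrite -Hf in Ht. by case: Ht.
      * have E : w = (u, false) by rewrite -[w]neg_litK -Ht.
        by move: HwI; rewrite E Hf.
      * have E : w = (u, true) by rewrite -[w]neg_litK -Hf.
        by move: HwI; rewrite E Ht.
      * apply: HI.2. by exists u.
  have [U0 [HU0 [v [Ht Hf]]]] := proj2 (up _ HI') Hfal.
  have [U [HU HUU0]] := simulate Hw HI.1 NC HU0.
  have Hv : v \in allvars S (cvars q).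
    have [c Hc Hvc] := ur_lits HU0 Ht.
    case/mem_restr: Hc => [Hc | [l Hl Ec]].
    * rewrite mem_cat; apply/orP; left. apply/mapP; exists (v, true) => //.
      apply/flattenP; by exists c.
    * subst c; move: Hvc; rewrite mem_seq1 => /eqP Ev; subst l.
      rewrite mem_cat; apply/orP; right. move: Hl; rewrite inE => /orP [/eqP E | Hl].
      { have -> : v = (neg_lit w).1 by rewrite -E. exact: Hw. }
      exact: (HI.1 _ Hl).
  set cc := [:: neg_lit (rl (bnd S (cvars q)) w (v, true));
               neg_lit (rl (bnd S (cvars q)) w (v, false)); w].
  have Hcc : cc \in cnf_restr (big S (cvars q)) I.
    rewrite /cnf_restr mem_cat; apply/orP; left. apply: (copy_sub Hw).
    rewrite /copy inE !mem_cat; apply/orP; right; apply/orP; right; apply/orP; left.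
    exact: map_f.
  have Hunit : unit_wrt U cc w.
    split; first by rewrite !inE eqxx !orbT.
    move=> l'; rewrite !inE => /orP [/eqP -> _ | /orP [/eqP -> _ | /eqP -> H]].
    + rewrite neg_litK; exact: HUU0.
    + rewrite neg_litK; exact: HUU0.
    + by case: H.
  have [U' [HU' _ Hin]] := ur_close NC HU Hcc Hunit.
  by exists U'.
Qed.

Lemma cnf_size_cat a b : cnf_size (a ++ b) = cnf_size a + cnf_size b.
Proof. by rewrite /cnf_size map_cat sumn_cat. Qed.

Lemma cnf_size_flatten (ss : seq cnf) : cnf_size (flatten ss) = sumn (map cnf_size ss).
Proof. elim: ss => //= s ss IH; by rewrite cnf_size_cat IH. Qed.

Lemma sumn_map_le (T : eqType) (f : T -> nat) xs K :
  (forall x, x \in xs -> f x <= K) -> sumn (map f xs) <= size xs * K.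
Proof.
elim: xs => //= a xs IH H. rewrite mulSn leq_add //; first by apply: H; rewrite inE eqxx.
apply: IH => x Hx; apply: H; by rewrite inE Hx orbT.
Qed.

Lemma sumn_le (T : eqType) (f g : T -> nat) xs :
  (forall x, x \in xs -> f x <= g x) -> sumn (map f xs) <= sumn (map g xs).
Proof.
elim: xs => //= a xs IH H. rewrite leq_add //; first by apply: H; rewrite inE eqxx.
apply: IH => x Hx; apply: H; by rewrite inE Hx orbT.
Qed.

Lemma size_litsV V : size (litsV V) = 2 * size V.
Proof. elim: V => //= a V IH. rewrite -/(litsV V) IH. lia. Qed.

Lemma size_allvars S V : size (allvars S V) = cnf_size S + size V.
Proof. by rewrite /allvars size_cat size_map size_flatten. Qed.

Lemma sumn_sq (S : cnf) : sumn [seq size c * (size c).+1 | c <- S] <= cnf_size S * (cnf_size S).+1.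
Proof.
elim: S => //= c S IH. rewrite /cnf_size /= -/(cnf_size S). nia.
Qed.

Lemma horn_size M w S : cnf_size (horn M w S) <= cnf_size S * (cnf_size S).+1.
Proof.
rewrite /horn cnf_size_flatten -map_comp. apply: leq_trans (sumn_sq S).
apply: sumn_le => c _ /=. rewrite /cnf_size -map_comp.
apply: sumn_map_le => x _ /=.
rewrite /hc /= size_map ltnS size_filter. exact: count_size.
Qed.

Definition Tb (s n : nat) : nat := s + (2 * n) * (1 + s * s.+1 + 3 * (s + n) + 4 * n).

Lemma copy_size S V M w : cnf_size (copy S V M w) <= 1 + cnf_size S * (cnf_size S).+1 + 3 * (cnf_size S + size V) + 4 * size V.
Proof.
rewrite /copy.
have -> : cnf_size ([:: rl M w (neg_lit w)] :: horn M w S ++ confl M w S V ++ links M w V)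
  = 1 + (cnf_size (horn M w S) + (cnf_size (confl M w S V) + cnf_size (links M w V))).
  by rewrite /cnf_size /= -!/(cnf_size _) !cnf_size_cat.
have h1 := horn_size M w S.
have h2 : cnf_size (confl M w S V) <= 3 * (cnf_size S + size V).
  rewrite /confl /cnf_size -map_comp mulnC -size_allvars. exact: sumn_map_le.
have h3 : cnf_size (links M w V) <= 4 * size V.
  rewrite /links /cnf_size -map_comp.
  have -> : 4 * size V = size (litsV V) * 2 by rewrite size_litsV; lia.
  by apply: sumn_map_le.
lia.
Qed.

Lemma big_size S V : cnf_size (big S V) <= Tb (cnf_size S) (size V).
Proof.
rewrite /big cnf_size_cat cnf_size_flatten -map_comp /Tb leq_add2l -size_litsV.
apply: sumn_map_le => w _ /=. exact: copy_size.
Qed.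

Lemma Tb_mono s s' n : s <= s' -> Tb s n <= Tb s' n.
Proof. rewrite /Tb => H. nia. Qed.

Definition G n D := \sum_(i < D.+1) n ^ i.

Lemma G_S n D : G n D.+1 = 1 + n * G n D.
Proof.
rewrite /G big_ord_recl expn0 big_distrr /=. congr (_ + _).
apply: eq_bigr => i _. by rewrite expnS.
Qed.

Lemma G_le n D : G n D <= G n D.+1.
Proof. by rewrite /G [X in _ <= X]big_ord_recr /= leq_addr. Qed.

Lemma pow_le n D : n.+1 ^ D <= 2 ^ D * G n D.
Proof.
elim: D => [|D IH]; first by rewrite /G big_ord_recl big_ord0.
have h1 := G_S n D. have h2 := G_le n D.
rewrite !expnS. set p := n.+1 ^ D. set t := 2 ^ D. move: IH h1 h2; rewrite -/p -/t. nia.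
Qed.

Lemma peval_nseq C D n : peval (nseq D.+1 C) n = C * G n D.
Proof.
rewrite /peval /G big_distrr.
rewrite -(big_mkord xpredT (fun i => nth 0 (nseq D.+1 C) i * n ^ i)) size_nseq big_mkord.
apply: eq_bigr => i _. by rewrite nth_nseq ltn_ord.
Qed.

Lemma peval_ub P n : peval P n <= (\sum_(i < size P) nth 0 P i) * n.+1 ^ (size P).
Proof.
rewrite /peval big_distrl. apply: leq_sum => i _ /=. apply: leq_mul => //.
apply: leq_trans (leq_pexp2l _ (ltnW (ltn_ord i))) => //.
case: (posnP i) => [-> //|Hi]. by rewrite leq_exp2r.
Qed.

Lemma Tb_poly c d n : Tb (c * n.+1 ^ d) n <= 25 * (c.+1 ^ 2) * n.+1 ^ (2 * d + 2).
Proof.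
have HX : 0 < n.+1 ^ d by rewrite expn_gt0.
have -> : n.+1 ^ (2 * d + 2) = n.+1 ^ d * n.+1 ^ d * (n.+1 * n.+1).
  by rewrite -expnD mulnn -expnD; congr (_ ^ _); lia.
rewrite /Tb. set X := n.+1 ^ d. move: HX; rewrite -/X => HX.
set Y := c.+1 * X.
have hY1 : c * X <= Y by rewrite /Y; nia.
have hY2 : (c * X).+1 <= Y by rewrite /Y; nia.
have hY3 : 1 <= Y by rewrite /Y; nia.
have e : 25 * c.+1 ^ 2 * (X * X * (n.+1 * n.+1)) = 25 * (Y * Y) * (n.+1 * n.+1) by rewrite /Y; nia.
rewrite e.
have : c * X * (c * X).+1 <= Y * Y by apply: leq_mul.
move: hY1 hY3. generalize (c * X) => s. generalize Y => y. nia.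
Qed.

Theorem mainTheorem3 (Q : constraint -> Prop) :
  (exists P : seq nat, forall q, Q q ->
     exists S : cnf, is_encoding q S /\ upi q S /\
       cnf_size S <= peval P (size (cvars q))) ->
  (exists P' : seq nat, forall q, Q q ->
     exists S : cnf, is_encoding q S /\ upi q S /\ upac q S /\
       cnf_size S <= peval P' (size (cvars q))).
Proof.
move=> [P HP].
set c := \sum_(i < size P) nth 0 P i.
set D := 2 * size P + 2.
exists (nseq D.+1 (25 * c.+1 ^ 2 * 2 ^ D)).
move=> q Qq. have [S [enc [up sz]]] := HP q Qq.
exists (big S (cvars q)). split; first exact: enc_big.
split; first exact: upi_big. split; first exact: upac_big.
rewrite peval_nseq. set n := size (cvars q).
apply: leq_trans (big_size S (cvars q)) _.
apply: leq_trans (Tb_mono n (leq_trans sz (peval_ub P n))) _.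
apply: leq_trans (Tb_poly c (size P) n) _.
rewrite -/D -!mulnA leq_mul2l; apply/orP; right.
rewrite leq_mul2l; apply/orP; right. rewrite leq_mul2l; apply/orP; right. exact: pow_le.
Qed.
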